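(* Let $I=(T,((U_1,S_1),\dots,(U_k,S_k)))$ be an instance of \textsc{Generalized Graphic Inverse Voronoi in Trees} with $S_i\subseteq W_i$ for all $i$, let $xy\in E_1$ with $x\in W_1$ and $y\in U_1\setminus W_1$, and let $0<\varepsilon<\mathrm{res}(I)$. Let $I'$ be the instance obtained from $I$ by expanding the edge $xy$ from $E_1$ by $\varepsilon$. Suppose the answer to $I$ is ``yes''. If $\Sigma'$ is a solution to $I'$, then $\Sigma'$ is also a solution to $I$.
   Context: \textsc{Generalized Graphic Inverse Voronoi in Trees}: input is a tree $T$ with positive edge-lengths $\lambda$ and pairs $(U_1,S_1),\dots,(U_k,S_k)$ of subsets of $V(T)$ with $U_1,\dots,U_k$ covering $V(T)$. A solution is $s_1,\dots,s_k\in V(T)$ with $s_i\in S_i$ and $U_i=\mathrm{cell}_T(s_i,\{s_1,\dots,s_k\})$ for all $i$, where $\mathrm{cell}_T(s,\Sigma)=\{x\in V(T)\mid d_T(s,x)\le d_T(s',x)\ \forall s'\in\Sigma\}$ and $d_T$ is the shortest-path distance. For $i\in[k]$, $W_i=U_i\setminus\bigcup_{j\neq i}U_j$ and $E_i=\{uv\in E(T)\mid u\in W_i,\ v\in U_i\setminus W_i\}$. The resolution is $\mathrm{res}(I)=\min\bigl(\mathbb{R}_{>0}\cap\{d_T(s_i,u)-d_T(s_j,u)\mid u\in U_i\cap U_j,\ s_i\in S_i,\ s_j\in S_j,\ i,j\in[k]\}\bigr)$, with $\min\emptyset=+\infty$. Expansion of $xy\in E_1$ by $\varepsilon$: $T'$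 is obtained from $T$ by subdividing $xy$ with a new vertex $y'$, with $\lambda'(xy')=\lambda(xy)$, $\lambda'(yy')=\varepsilon$, other edges unchanged; $U_1'$ is the set of vertices of $U_1$ in the component of $T-y$ containing $x$, together with $y'$; $I'=(T',((U_1',S_1),(U_2,S_2),\dots,(U_k,S_k)))$. *)

(* Defs.v *)
From HB Require Import structures.
From mathcomp Require Import all_boot all_order all_algebra.
From mathcomp Require Import boolp classical_sets reals constructive_ereal.
Set Implicit Arguments. Unset Strict Implicit. Unset Printing Implicit Defensive.
Import Order.TTheory GRing.Theory Num.Theory.
Local Open Scope ring_scope.

Section Graph.
Variables (R : realType) (V : finType).

(* A graph is a relation e on the finite vertex type V; edge lengths are
   given by w : V -> V -> R (only relevant on edges). *)

Definition walk_weight (w : V -> V -> R) (u : V) (p : seq V) : R :=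
  \sum_(ab <- zip (u :: p) p) w ab.1 ab.2.

Definition is_walk (e : rel V) (u : V) (p : seq V) (v : V) : bool :=
  path e u p && (last u p == v).

Definition dist (e : rel V) (w : V -> V -> R) (u v : V) : R :=
  inf (fun r : R => exists p, is_walk e u p v /\ r = walk_weight w u p).

Definition connected_graph (e : rel V) : Prop :=
  forall u v, exists p, is_walk e u p v.

Definition acyclic (e : rel V) : Prop :=
  forall u p, path e u p -> last u p = u -> uniq p -> (size p < 3)%N.

Definition is_tree (e : rel V) : Prop :=
  symmetric e /\ irreflexive e /\ connected_graph e /\ acyclic e.

Definition edge_lengths (e : rel V) (w : V -> V -> R) : Prop :=
  forall u v, e u v -> 0 < w u v /\ w u v = w v u.

Definition cell (e : rel V) (w : V -> V -> R) (s : V) (Sig : {set V}) : {set V} :=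
  [set z | [forall t in Sig, dist e w s z <= dist e w t z]].

Definition is_solution (e : rel V) (w : V -> V -> R) (n : nat)
    (U S : 'I_n -> {set V}) (s : 'I_n -> V) : Prop :=
  forall i, s i \in S i /\ U i = cell e w (s i) [set s j | j : 'I_n].

Definition Wset (n : nat) (U : 'I_n -> {set V}) (i : 'I_n) : {set V} :=
  U i :\: \bigcup_(j | j != i) U j.

(* res(I), with min of the empty set = +oo *)
Definition res (e : rel V) (w : V -> V -> R) (n : nat)
    (U S : 'I_n -> {set V}) : \bar R :=
  \big[Order.min/+oo%E]_(i < n) \big[Order.min/+oo%E]_(j < n)
   \big[Order.min/+oo%E]_(u in U i :&: U j) \big[Order.min/+oo%E]_(si in S i)
   \big[Order.min/+oo%E]_(sj in S j | 0 < dist e w si u - dist e w sj u)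
     ((dist e w si u - dist e w sj u)%:E).

(* ---- expansion of the edge xy by eps: new vertex y' is None ---- *)
Definition exp_rel (e : rel V) (x y : V) : rel (option V) := fun a b =>
  match a, b with
  | Some a, Some b => e a b && ~~ (((a == x) && (b == y)) || ((a == y) && (b == x)))
  | Some a, None => (a == x) || (a == y)
  | None, Some b => (b == x) || (b == y)
  | None, None => false
  end.

Definition exp_len (w : V -> V -> R) (x y : V) (eps : R) :
    option V -> option V -> R := fun a b =>
  match a, b with
  | Some a, Some b => w a b
  | Some a, None => if a == x then w x y else if a == y then eps else 0
  | None, Some b => if b == x then w x y else if b == y then eps else 0
  | None, None => 0
  end.

Definition comp_avoid (e : rel V) (y x : V) : {set V} :=
  [set v | connect (fun a b => e a b && (a != y) && (b != y)) x v].

(* the sets of I' (index ord0 plays the role of index 1) *)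
Definition exp_U (e : rel V) (n : nat) (U : 'I_n.+1 -> {set V}) (x y : V)
    (i : 'I_n.+1) : {set option V} :=
  if i == ord0 then (Some @: (U i :&: comp_avoid e y x)) :|: [set None]
  else Some @: U i.

Definition exp_S (n : nat) (S : 'I_n -> {set V}) (i : 'I_n) : {set option V} :=
  Some @: S i.

End Graph.

(* Main.v *)
Require Import Defs.
From HB Require Import structures.
From mathcomp Require Import all_boot all_order all_algebra.
From mathcomp Require Import boolp classical_sets reals constructive_ereal.
Import Order.TTheory GRing.Theory Num.Theory.
Local Open Scope ring_scope.
From mathcomp Require Import ring lra.
Set Implicit Arguments. Unset Strict Implicit.
Section Metric.
Variables (R : realType) (V : finType) (e : rel V) (w : V -> V -> R).
Hypotheses (esym : symmetric e) (wl : edge_lengths e w) (conn : connected_graph e).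

Lemma ww_nil a : walk_weight w a [::] = 0.
Proof. by rewrite /walk_weight /= big_nil. Qed.

Lemma ww_cons a b p : walk_weight w a (b :: p) = w a b + walk_weight w b p.
Proof. by rewrite /walk_weight /= big_cons. Qed.

Definition potential (h : V -> R) := forall u v, e u v -> h v - h u <= w u v.

Lemma pot_walk h : potential h -> forall p a, path e a p ->
  h (last a p) - h a <= walk_weight w a p.
Proof.
move=> hp; elim=> [|b p IH] a /=; first by rewrite ww_nil subrr.
move=> /andP[eab pb]; rewrite ww_cons.
have := IH _ pb; have := hp _ _ eab => h1 h2.
have -> : h (last b p) - h a = (h (last b p) - h b) + (h b - h a) by ring.
by rewrite addrC lerD.
Qed.

Lemma pot_dist h : potential h -> forall a b, h b - h a <= dist e w a b.
Proof.
move=> hp a b; apply: lb_le_inf.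
  by have [p pw] := conn a b; exists (walk_weight w a p); exists p.
move=> r [p [/andP[pp /eqP lp] ->]]; rewrite -lp; exact: pot_walk.
Qed.

Lemma pot0 : potential (fun _ => 0).
Proof. by move=> u v /wl [/ltW + _]; rewrite subrr. Qed.

Lemma dist_walk a p b : is_walk e a p b -> dist e w a b <= walk_weight w a p.
Proof.
move=> wp; have := @ge_inf R (fun r => exists p, is_walk e a p b /\ r = walk_weight w a p).
apply.
  exists 0 => r [q [/andP[pq /eqP lq] ->]].
  by have := pot_walk pot0 pq; rewrite subrr.
by exists p.
Qed.

Lemma dist_ge0 a b : 0 <= dist e w a b.
Proof. by have := pot_dist pot0 a b; rewrite subrr. Qed.

Lemma dist_aa a : dist e w a a = 0.
Proof.
apply/eqP; rewrite eq_le dist_ge0 andbT.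
have := @dist_walk a [::] a; rewrite ww_nil; apply.
by rewrite /is_walk /= eqxx.
Qed.

Lemma dist_edge u v : e u v -> dist e w u v <= w u v.
Proof.
move=> euv; have := @dist_walk u [:: v] v; rewrite ww_cons ww_nil addr0; apply.
by rewrite /is_walk /= euv eqxx.
Qed.

Lemma dist_prepend v u b : e v u -> dist e w v b <= w v u + dist e w u b.
Proof.
move=> evu; rewrite -lerBlDl; apply: lb_le_inf.
  by have [p pw] := conn u b; exists (walk_weight w u p); exists p.
move=> r [p [/andP[pp /eqP lp] ->]]; rewrite lerBlDl -ww_cons.
by apply: dist_walk; rewrite /is_walk /= evu pp lp eqxx.
Qed.

Lemma dist_triangle a c b : dist e w a b <= dist e w a c + dist e w c b.
Proof.
have hp : potential (fun t => - dist e w t b).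
  by move=> u v euv; have := dist_prepend b euv; lra.
by have := pot_dist hp a c; lra.
Qed.

Lemma dist_sym a b : dist e w a b = dist e w b a.
Proof.
suff H : forall a b, dist e w a b <= dist e w b a by apply/eqP; rewrite eq_le !H.
move=> {}a {}b.
have hp : potential (fun t => dist e w t b).
  move=> u v euv; have [_ wuv] := wl euv.
  have evu : e v u by rewrite esym.
  by have := dist_prepend b evu; lra.
by have := pot_dist hp b a; rewrite dist_aa subr0.
Qed.

Lemma dist_pot a : potential (dist e w a).
Proof.
move=> u v euv; have := dist_triangle a u v; have := dist_edge euv; lra.
Qed.


Section Tree.
Hypotheses (irr : irreflexive e) (acyc : acyclic e).

Definition ravoid v : rel V := fun a b => e a b && (a != v) && (b != v).

Lemma in_comp v u t : (t \in comp_avoid e v u) = connect (ravoid v) u t.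
Proof. by rewrite /comp_avoid inE. Qed.

Lemma path_avoid v u p : path (ravoid v) u p -> all (fun t => t != v) p.
Proof.
elim: p u => [|b p IH] u //= /andP[/andP[/andP[_ _] bv] pb].
by rewrite bv (IH _ pb).
Qed.

Lemma conn_neq v u t : u != v -> connect (ravoid v) u t -> t != v.
Proof.
move=> uv /connectP [p pp ->]; have := mem_last u p; rewrite inE.
case/orP => [/eqP -> //|tp].
by have /allP := path_avoid pp; apply.
Qed.

Lemma comp_G v u a b : e u v -> a \in comp_avoid e v u -> e a b ->
  b \notin comp_avoid e v u -> a = u /\ b = v.
Proof.
move=> euv; rewrite !in_comp => ca eab nb.
have uv : u != v by apply: contraTneq euv => ->; rewrite irr.
have av := conn_neq uv ca.
have bv : b = v.
  apply/eqP; apply: contraNT nb => bv; apply: connect_trans ca (connect1 _).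
  by rewrite /ravoid eab av bv.
split => //; subst b.
case/connectP: ca => p pp ap; rewrite ap in eab *.
move: eab; case: (shortenP pp) => p' pp' up' _ eab.
have pe : path e u p' by apply: sub_path pp' => s t /andP[/andP[]].
have vp' : v \notin p'.
  by apply/negP => /(allP (path_avoid pp')); rewrite eqxx.
have := @acyc v (u :: rcons p' v).
rewrite /= rcons_path pe eab esym euv last_rcons /= mem_rcons inE negb_or uv.
move: up'; rewrite /= rcons_uniq vp' => /andP[-> ->].
move=> /(_ isT erefl isT); rewrite size_rcons.
by case: p' {pp' pe vp' eab pp ap} => [|? ?].
Qed.

Lemma comp_aux v : forall p a, path e a p -> last a p != v ->
  (a != v /\ connect (ravoid v) a (last a p)) \/
  exists2 u, e v u & connect (ravoid v) u (last a p).
Proof.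
elim=> [|b p IH] a /=.
  by move=> _ av; left; split => //; exact: connect0.
move=> /andP [eab pb] lv; case: (IH b pb lv) => [[bv cb]|[u evu cu]]; last first.
  by right; exists u.
case: (eqVneq a v) => [av|av].
  by right; exists b => //; rewrite -av.
left; split => //; apply: connect_trans (connect1 _) cb.
by rewrite /ravoid eab av bv.
Qed.

Lemma comp_cover v t : t != v -> exists2 u, e u v & t \in comp_avoid e v u.
Proof.
move=> tv; have [p /andP[pp /eqP lp]] := conn v t.
case: (@comp_aux v p v pp) => [|[/eqP//]|[u evu cu]]; first by rewrite lp.
by exists u; [rewrite esym | rewrite in_comp -lp].
Qed.

Lemma cut v u a b : e u v -> a \in comp_avoid e v u -> b \notin comp_avoid e v u ->
  dist e w a u + w u v + dist e w v b <= dist e w a b.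
Proof.
move=> euv aC bC.
pose h t := if t \in comp_avoid e v u then dist e w a t
            else dist e w a u + w u v + dist e w v t.
have hp : potential h.
  move=> t t' ett'; rewrite /h.
  case: (boolP (t \in comp_avoid e v u)) => tC;
  case: (boolP (t' \in comp_avoid e v u)) => t'C.
  - exact: dist_pot.
  - have [-> ->] := comp_G euv tC ett' t'C; rewrite dist_aa; lra.
  - have et't : e t' t by rewrite esym.
    have [-> ->] := comp_G euv t'C et't tC; rewrite dist_aa.
    have [wp <-] := wl euv; lra.
  - by have := dist_pot v ett'; lra.
have := pot_dist hp a b; rewrite /h (negbTE bC) aC dist_aa; lra.
Qed.

End Tree.
End Metric.

Lemma cellP (R : realType) (T : finType) (e0 : rel T) (w0 : T -> T -> R) n
    (f : 'I_n -> T) a t :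
  reflect (forall j, dist e0 w0 a t <= dist e0 w0 (f j) t)
          (t \in cell e0 w0 a [set f j | j : 'I_n]).
Proof.
rewrite /cell inE; apply: (iffP forallP) => H.
  by move=> j; have /implyP := H (f j); apply; apply: imset_f.
by move=> b; apply/implyP => /imsetP [j _ ->].
Qed.

Lemma ex_min (R : realType) n (F : 'I_n.+1 -> R) : exists i, forall j, F i <= F j.
Proof. by case: (@arg_minP _ _ _ ord0 xpredT F isT) => i _ H; exists i => j; apply: H. Qed.

Lemma inWP (T : finType) n (U0 : 'I_n -> {set T}) i t :
  t \in Wset U0 i -> t \in U0 i /\ forall j, j != i -> t \notin U0 j.
Proof.
move=> /setDP [tU tn]; split => // j ji; apply: contra tn => tj.
by apply/bigcupP; exists j.
Qed.

Lemma notW (T : finType) n (U0 : 'I_n -> {set T}) i t :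
  t \in U0 i -> t \notin Wset U0 i -> exists2 j, j != i & t \in U0 j.
Proof.
move=> tU tW; have : t \in \bigcup_(j | j != i) U0 j.
  by apply: contraNT tW => tn; apply/setDP.
by case/bigcupP => j ji tj; exists j.
Qed.

Section Main.
Variables (R : realType) (V : finType) (e : rel V) (w : V -> V -> R)
    (k : nat) (U S : 'I_k.+1 -> {set V}) (x y : V) (eps : R).
Hypotheses (tree : is_tree e) (wl : edge_lengths e w) (exy : e x y) (epos : 0 < eps).

Let esym : symmetric e. Proof. by case: tree. Qed.
Let irr : irreflexive e. Proof. by case: tree => _ []. Qed.
Let conn : connected_graph e. Proof. by case: tree => _ [_ []]. Qed.
Let acyc : acyclic e. Proof. by case: tree => _ [_ []]. Qed.

Notation e' := (exp_rel e x y).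
Notation w' := (exp_len w x y eps).
Notation d := (dist e w).
Notation d' := (dist e' w').
Notation A := (comp_avoid e y x).
Notation lam := (w x y).

Let xy : x != y. Proof. by apply: contraTneq exy => ->; rewrite irr. Qed.
Let yx : (y == x) = false. Proof. by rewrite eq_sym (negbTE xy). Qed.
Let lpos : 0 < lam. Proof. by have [] := wl exy. Qed.

Let esym' : symmetric e'.
Proof.
case=> [a|] [b|] //=; rewrite esym.
by case: (a == x); case: (a == y); case: (b == x); case: (b == y).
Qed.

Let wl' : edge_lengths e' w'.
Proof.
case=> [a|] [b|] //=.
- by move=> /andP[/wl].
- move=> H; case: (eqVneq a x) => [_|ax] /=; first by split.
  by move: H; rewrite (negbTE ax) /= => ->.
- move=> H; case: (eqVneq b x) => [_|bx] /=; first by split.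
  by move: H; rewrite (negbTE bx) /= => ->.
Qed.

Let step' a b : e a b -> connect e' (Some a) (Some b).
Proof.
move=> eab; case H : (e' (Some a) (Some b)); first exact: connect1.
move: H => /= /negbT; rewrite eab /= negbK => /orP[]/andP[/eqP-> /eqP->].
  apply: (@connect_trans _ _ None); apply: connect1 => /=; by rewrite ?eqxx ?orbT.
apply: (@connect_trans _ _ None); apply: connect1 => /=; by rewrite ?eqxx ?orbT.
Qed.

Let conn' : connected_graph e'.
Proof.
have hN : forall t, connect e' None t.
  have hx : forall p a, path e a p -> connect e' (Some a) (Some (last a p)).
    elim=> [|b p IH] a /=; first by move=> _; exact: connect0.
    by move=> /andP[eab pb]; apply: connect_trans (step' eab) (IH _ pb).
  case=> [t|]; last exact: connect0.
  have [p /andP[pp /eqP <-]] := conn x t.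
  apply: (@connect_trans _ _ (Some x)); last exact: hx.
  by apply: connect1 => /=; rewrite eqxx.
move=> a b; have : connect e' a b.
  by apply: (@connect_trans _ _ None); [rewrite (sym_connect_sym esym') |].
by case/connectP => p pp ->; exists p; rewrite /is_walk pp eqxx.
Qed.

Let xA : x \in A. Proof. by rewrite in_comp connect0. Qed.
Let yA : y \notin A.
Proof. by apply/negP; rewrite in_comp => /(conn_neq xy); rewrite eqxx. Qed.

Let cutA a b : a \in A -> b \notin A -> d a x + lam + d y b <= d a b.
Proof. by move=> aA bA; apply: cut. Qed.


Ltac lra' := have := epos; have := lpos; lra.

Let daa := dist_aa wl conn.
Let dtri := dist_triangle wl conn.
Let dsym := dist_sym esym wl conn.
Let dedge := dist_edge wl.
Let dpot := dist_pot wl conn.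
Let dge0 := dist_ge0 wl conn.
Let d'aa := dist_aa wl' conn'.
Let d'tri := dist_triangle wl' conn'.
Let d'sym := dist_sym esym' wl' conn'.
Let d'edge := dist_edge wl'.
Let d'pot := dist_pot wl' conn'.
Let d'ge0 := dist_ge0 wl' conn'.
Let compG := comp_G esym irr acyc.

Let wpos u v : e u v -> 0 < w u v. Proof. by move=> /wl[]. Qed.

Let dAy a : a \in A -> d a y = d a x + lam.
Proof.
move=> aA; apply/eqP; rewrite eq_le; apply/andP; split.
  by have := dtri a x y; have := dedge exy; lra'.
by have := cutA aA yA; rewrite daa; lra'.
Qed.

Definition HA a (t : option V) : R :=
  match t with Some t => if t \in A then d a t else d a t + eps
  | None => d a x + lam end.
Definition HB a (t : option V) : R :=
  match t with Some t => if t \in A then d a t + eps else d a t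
  | None => d a y + eps end.

Let LA a t : a \in A -> HA a t <= d' (Some a) t.
Proof.
move=> aA.
have hp : potential e' w' (HA a).
  case=> [t1|] [t2|] //=.
  - move=> /andP[e12 n12].
    case: (boolP (t1 \in A)) => t1A; case: (boolP (t2 \in A)) => t2A.
    + exact: dpot.
    + have [? ?] := compG exy t1A e12 t2A; subst.
      by move: n12; rewrite !eqxx.
    + have e21 : e t2 t1 by rewrite esym.
      have [? ?] := compG exy t2A e21 t1A; subst.
      by move: n12; rewrite !eqxx orbT.
    + by have := dpot a e12; lra'.
  - move=> H; case: (eqVneq t1 x) => [?|tx] /=.
      by subst; rewrite xA; lra'.
    have /eqP ? : t1 == y by move: H; rewrite (negbTE tx).
    subst; rewrite (negbTE yA) eqxx.
    by have := cutA aA yA; rewrite daa; lra'.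
  - move=> H; case: (eqVneq t2 x) => [?|tx] /=.
      by subst; rewrite xA; lra'.
    have /eqP ? : t2 == y by move: H; rewrite (negbTE tx).
    subst; rewrite (negbTE yA) eqxx.
    by rewrite (dAy aA); lra'.
have := pot_dist conn' hp (Some a) t; rewrite /= aA daa; lra'.
Qed.

Let LB a t : a \notin A -> HB a t <= d' (Some a) t.
Proof.
move=> aA.
have hp : potential e' w' (HB a).
  case=> [t1|] [t2|] //=.
  - move=> /andP[e12 n12].
    case: (boolP (t1 \in A)) => t1A; case: (boolP (t2 \in A)) => t2A.
    + by have := dpot a e12; lra'.
    + have [? ?] := compG exy t1A e12 t2A; subst.
      by move: n12; rewrite !eqxx.
    + have e21 : e t2 t1 by rewrite esym.
      have [? ?] := compG exy t2A e21 t1A; subst.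
      by move: n12; rewrite !eqxx orbT.
    + exact: dpot.
  - move=> H; case: (eqVneq t1 x) => [?|tx] /=.
      subst; rewrite xA.
      by have := dtri a x y; have := dedge exy; lra'.
    have /eqP ? : t1 == y by move: H; rewrite (negbTE tx).
    by subst; rewrite (negbTE yA) eqxx; lra'.
  - move=> H; case: (eqVneq t2 x) => [?|tx] /=.
      subst; rewrite xA.
      have eyx : e y x by rewrite esym.
      have := dtri a y x; have := dedge eyx; have [_ <-] := wl exy; lra'.
    have /eqP ? : t2 == y by move: H; rewrite (negbTE tx).
    by subst; rewrite (negbTE yA) eqxx; lra'.
have := pot_dist conn' hp (Some a) t; rewrite /= (negbTE aA) daa; lra'.
Qed.

Let UA a b : a \in A -> b \in A -> d' (Some a) (Some b) <= d a b.
Proof.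
move=> aA bA.
pose h t := if t \in A then d' (Some a) (Some t) else d' (Some a) (Some x).
have hp : potential e w h.
  move=> t1 t2 e12; rewrite /h.
  case: (boolP (t1 \in A)) => t1A; case: (boolP (t2 \in A)) => t2A.
  - have E : e' (Some t1) (Some t2).
      rewrite /= e12 /=; apply/negP => /orP[]/andP[/eqP ? /eqP ?]; subst.
        by move: t2A; rewrite (negbTE yA).
      by move: t1A; rewrite (negbTE yA).
    exact: (d'pot (Some a) E).
  - have [? ?] := compG exy t1A e12 t2A; subst.
    by have := wpos e12; lra'.
  - have e21 : e t2 t1 by rewrite esym.
    have [? ?] := compG exy t2A e21 t1A; subst.
    by have := wpos e12; lra'.
  - by have := wpos e12; lra'.
by have := pot_dist conn hp a b; rewrite /h aA bA d'aa; lra'.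
Qed.

Let UB a b : a \notin A -> b \notin A -> d' (Some a) (Some b) <= d a b.
Proof.
move=> aA bA.
pose h t := if t \in A then d' (Some a) (Some y) else d' (Some a) (Some t).
have hp : potential e w h.
  move=> t1 t2 e12; rewrite /h.
  case: (boolP (t1 \in A)) => t1A; case: (boolP (t2 \in A)) => t2A.
  - by have := wpos e12; lra'.
  - have [? ?] := compG exy t1A e12 t2A; subst.
    by have := wpos e12; lra'.
  - have e21 : e t2 t1 by rewrite esym.
    have [? ?] := compG exy t2A e21 t1A; subst.
    by have := wpos e12; lra'.
  - have E : e' (Some t1) (Some t2).
      rewrite /= e12 /=; apply/negP => /orP[]/andP[/eqP ? /eqP ?]; subst.
        by move: t1A; rewrite xA.
      by move: t2A; rewrite xA.
    exact: (d'pot (Some a) E).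
by have := pot_dist conn hp a b; rewrite /h (negbTE aA) (negbTE bA) d'aa; lra'.
Qed.


Let exN : e' (Some x) None. Proof. by rewrite /= eqxx. Qed.
Let eNy : e' None (Some y). Proof. by rewrite /= eqxx orbT. Qed.
Let eyN : e' (Some y) None. Proof. by rewrite /= eqxx orbT. Qed.
Let d'xN : d' (Some x) None <= lam.
Proof. by have := d'edge exN; rewrite /= eqxx. Qed.
Let d'Ny : d' None (Some y) <= eps.
Proof. by have := d'edge eNy; rewrite /= yx eqxx. Qed.
Let d'yN : d' (Some y) None <= eps.
Proof. by have := d'edge eyN; rewrite /= yx eqxx. Qed.

Let DA a b : a \in A -> b \in A -> d' (Some a) (Some b) = d a b.
Proof.
move=> aA bA; apply/eqP; rewrite eq_le UA //=.
by have := LA (Some b) aA; rewrite /= bA.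
Qed.

Let DB a b : a \notin A -> b \notin A -> d' (Some a) (Some b) = d a b.
Proof.
move=> aA bA; apply/eqP; rewrite eq_le UB //=.
by have := LB (Some b) aA; rewrite /= (negbTE bA).
Qed.

Let DAB a b : a \in A -> b \notin A -> d' (Some a) (Some b) = d a b + eps.
Proof.
move=> aA bA; apply/eqP; rewrite eq_le; apply/andP; split; last first.
  by have := LA (Some b) aA; rewrite /= (negbTE bA).
have := d'tri (Some a) (Some x) (Some b).
have := d'tri (Some x) None (Some b).
have := d'tri None (Some y) (Some b).
rewrite (DA aA xA) (DB yA bA).
have := cutA aA bA; have := d'xN; have := d'Ny; lra'.
Qed.

Let DBA a b : a \notin A -> b \in A -> d' (Some a) (Some b) = d a b + eps.
Proof. by move=> aA bA; rewrite d'sym DAB // dsym. Qed.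

Let DNA a : a \in A -> d' (Some a) None = d a y.
Proof.
move=> aA; apply/eqP; rewrite eq_le; apply/andP; split.
  by have := d'tri (Some a) (Some x) None; rewrite (DA aA xA) dAy //; have := d'xN; lra'.
by have := LA None aA; rewrite /= dAy.
Qed.

Let DNB a : a \notin A -> d' (Some a) None = d a y + eps.
Proof.
move=> aA; apply/eqP; rewrite eq_le; apply/andP; split.
  by have := d'tri (Some a) (Some y) None; rewrite (DB aA yA); have := d'yN; lra'.
by have := LB None aA.
Qed.

Let dle a b : d a b <= d' (Some a) (Some b).
Proof.
case: (boolP (a \in A)) => aA; case: (boolP (b \in A)) => bA.
- by rewrite DA.
- by rewrite DAB //; lra'.
- by rewrite DBA //; lra'.
- by rewrite DB.
Qed.


Let notinC v u : e u v -> v \notin comp_avoid e v u.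
Proof.
move=> euv; have uv : u != v by apply: contraTneq euv => ->; rewrite irr.
by apply/negP; rewrite in_comp => /(conn_neq uv); rewrite eqxx.
Qed.

Let cutv v u a b : e u v -> a \in comp_avoid e v u -> b \notin comp_avoid e v u ->
  d a v + d v b <= d a b.
Proof.
move=> euv aC bC; have := cut esym wl conn irr acyc euv aC bC.
have := dtri a u v; have := dedge euv; lra'.
Qed.

Let strictC v u a z : e u v -> a \in comp_avoid e v u -> z \in comp_avoid e v u ->
  d a z < d a v + d v z.
Proof.
move=> euv aC zC; have vC := notinC euv.
have h1 := cut esym wl conn irr acyc euv aC vC.
have h2 := cut esym wl conn irr acyc euv zC vC.
rewrite daa in h1; rewrite daa (dsym z u) (dsym z v) in h2.
have := dtri a u z; have := wpos euv; lra'.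
Qed.

Let zgen v a b z : d a b < d a v + d v b -> d a z < d a v + d v z ->
  d b z < d b v + d v z.
Proof.
move=> h1 h2.
have zv : z != v by apply: contraTneq h2 => ->; rewrite daa addr0 ltxx.
have [u euv zC] := comp_cover esym conn zv.
have aC : a \in comp_avoid e v u.
  apply: contraTT h2 => aC; rewrite -leNgt.
  by have := cutv euv zC aC; rewrite (dsym z v) (dsym z a) (dsym v a); lra'.
have bC : b \in comp_avoid e v u.
  by apply: contraTT h1 => bC; rewrite -leNgt; exact: cutv euv aC bC.
exact: strictC euv bC zC.
Qed.


Section Sol.
Variables (sg : 'I_k.+1 -> V) (s' : 'I_k.+1 -> option V).
Hypotheses (SW : forall i, S i \subset Wset U i)
  (yU : y \in U ord0 :\: Wset U ord0)
  (eres : (eps%:E < res e w U S)%E)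
  (sgsol : is_solution e w U S sg)
  (s'sol : is_solution e' w' (exp_U e U x y) (exp_S S) s').

Let s i := odflt x (s' i).

Let Es i : s' i = Some (s i).
Proof. by rewrite /s; have := (s'sol i).1; rewrite /exp_S => /imsetP [v _ ->]. Qed.

Let sS i : s i \in S i.
Proof. by have := (s'sol i).1; rewrite /exp_S Es (mem_imset _ _ Some_inj). Qed.

Let sW i : s i \in Wset U i. Proof. by have /fintype.subsetP := SW i; apply. Qed.
Let sgS i : sg i \in S i. Proof. exact: (sgsol i).1. Qed.
Let sgW i : sg i \in Wset U i. Proof. by have /fintype.subsetP := SW i; apply. Qed.

Let inU i t : t \in U i <-> forall j, d (sg i) t <= d (sg j) t.
Proof. by rewrite (sgsol i).2; split => [/cellP|H]; [done | apply/cellP]. Qed.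

Let inU' i t : t \in exp_U e U x y i <-> forall j, d' (Some (s i)) t <= d' (Some (s j)) t.
Proof.
rewrite (s'sol i).2; split => [/cellP H j|H]; first by rewrite -!Es.
by apply/cellP => j; rewrite !Es; exact: H.
Qed.

Let USome i t : (Some t \in exp_U e U x y i) = (t \in U i) && ((i == ord0) ==> (t \in A)).
Proof.
rewrite /exp_U; case: (i == ord0) => /=.
  by rewrite finset.in_setU finset.in_set1 /= orbF (mem_imset _ _ Some_inj) finset.in_setI.
by rewrite andbT (mem_imset _ _ Some_inj).
Qed.

Let NoneU i : (None \in exp_U e U x y i) = (i == ord0).
Proof.
rewrite /exp_U; case: (i == ord0).
  by rewrite finset.in_setU finset.in_set1 eqxx orbT.
by apply/imsetP => [[v _]].
Qed.

Let resle i j u a b : u \in U i -> u \in U j -> a \in S i -> b \in S j ->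
  d a u <= d b u + eps -> d a u <= d b u.
Proof.
move=> ui uj ai bj H; rewrite leNgt; apply/negP => H2.
have pos : 0 < d a u - d b u by rewrite subr_gt0.
have : (res e w U S <= (d a u - d b u)%:E)%E.
  rewrite /res; apply: (bigmin_inf i) => //.
  apply: (bigmin_inf j) => //.
  apply: (bigmin_inf u); first by rewrite finset.in_setI ui uj.
  apply: (bigmin_inf a) => //.
  by apply: (bigmin_inf b); first by rewrite bj pos.
move=> /(lt_le_trans eres); rewrite lte_fin; lra'.
Qed.

Let s0A : s ord0 \in A.
Proof.
have : Some (s ord0) \in exp_U e U x y ord0.
  by apply/inU' => j; rewrite d'aa; exact: d'ge0.
by rewrite USome eqxx /= => /andP[].
Qed.

Let cover' t : exists i, t \in exp_U e U x y i.
Proof.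
have [i Hi] := ex_min (fun j => d' (Some (s j)) t).
by exists i; apply/inU' => j; exact: Hi j.
Qed.

Let W0A t : t \in Wset U ord0 -> t \in A.
Proof.
move=> tW; have [tU tn] := inWP tW.
have [i] := cover' (Some t); rewrite USome => /andP [tUi].
case: (eqVneq i ord0) => [_|io] /=; first by [].
by have := tn i io; rewrite tUi.
Qed.

Let sg0A : sg ord0 \in A. Proof. exact: W0A (sgW ord0). Qed.

Let step1 j : j != ord0 -> d' (Some (s ord0)) None < d' (Some (s j)) None.
Proof.
move=> j0; rewrite ltNge; apply/negP => H.
have : None \in exp_U e U x y j.
  apply/inU' => l; apply: le_trans H _.
  by apply: (iffLR (inU' ord0 None)); rewrite NoneU.
by rewrite NoneU (negbTE j0).
Qed.

Let step1A j : j != ord0 -> s j \in A -> d (s ord0) y < d (s j) y.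
Proof. by move=> j0 jA; have := step1 j0; rewrite (DNA s0A) (DNA jA). Qed.

Let step1B j : s j \notin A -> d (s ord0) y < d (s j) y + eps.
Proof.
move=> jA; have j0 : j != ord0 by apply: contraNneq jA => ->.
by have := step1 j0; rewrite (DNA s0A) (DNB jA).
Qed.

Let y0 : y \in U ord0. Proof. by case/setDP: yU. Qed.

Section WithM.
Variable (m : 'I_k.+1).
Hypotheses (m0 : m != ord0) (ym : y \in U m).

Let ym' l : d' (Some (s m)) (Some y) <= d' (Some (s l)) (Some y).
Proof.
have : Some y \in exp_U e U x y m by rewrite USome ym (negbTE m0).
by move/inU'; apply.
Qed.

Let smA : s m \notin A.
Proof.
apply/negP => mA; have := ym' ord0; rewrite (DAB mA yA) (DAB s0A yA).
have := step1A m0 mA; lra'.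
Qed.

Let smy : d (s m) y = d (s ord0) y.
Proof.
have h1 := ym' ord0; rewrite (DB smA yA) (DAB s0A yA) in h1.
have h2 := step1B smA.
apply/eqP; rewrite eq_le; apply/andP; split.
  by apply: (resle ym y0 (sS m) (sS ord0)); lra'.
by apply: (resle y0 ym (sS ord0) (sS m)); lra'.
Qed.

Let FactY l : d (s ord0) y <= d (s l) y.
Proof.
case: (boolP (s l \in A)) => lA.
  case: (eqVneq l ord0) => [->|l0]; first exact: lexx.
  by have := step1A l0 lA; lra'.
by have := ym' l; rewrite (DB smA yA) (DB lA yA) smy.
Qed.

Let c1 : d (sg ord0) y = d (sg m) y.
Proof.
apply/eqP; rewrite eq_le; apply/andP; split.
  exact: (iffLR (inU ord0 y) y0 m).
exact: (iffLR (inU m y) ym ord0).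
Qed.

Let K : d (sg m) (s m) < d (sg m) y + d (s m) y.
Proof.
have [smU smn] := inWP (sW m).
have sm0 : s m \notin U ord0 by apply: smn; rewrite eq_sym.
rewrite ltNge; apply/negP => H; apply: (negP sm0); apply/inU => j.
have := (iffLR (inU m (s m)) smU) j; have := dtri (sg ord0) y (s m).
rewrite (dsym y (s m)) c1; lra'.
Qed.

Let Equiv z : d (s m) z < d (s m) y + d y z <-> d (sg m) z < d (sg m) y + d y z.
Proof.
split => H.
  have h1 : d (s m) (sg m) < d (s m) y + d y (sg m).
    by rewrite (dsym (s m) (sg m)) (dsym y (sg m)); have := K; lra'.
  exact: zgen h1 H.
have h1 : d (sg m) (s m) < d (sg m) y + d y (s m).
  by rewrite (dsym y (s m)); exact: K.
exact: zgen h1 H.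
Qed.

Let key i z : z \in U i <-> forall j, d (s i) z <= d (s j) z.
Proof.
case: (boolP (z \in A)) => zA.
  have near : forall l, s l \notin A -> d (s ord0) z < d (s l) z.
    move=> l lA; have h := cutA zA lA.
    rewrite (dsym z x) (dsym z (s l)) (dsym y (s l)) in h.
    have := FactY l; have := dAy s0A; have := dtri (s ord0) x z; lra'.
  split.
    move=> zU.
    have Sz : Some z \in exp_U e U x y i by rewrite USome zU zA implybT.
    have H' := iffLR (inU' i (Some z)) Sz.
    case: (boolP (s i \in A)) => iA.
      move=> j; case: (boolP (s j \in A)) => jA.
        by have := H' j; rewrite (DA iA zA) (DA jA zA).
      by have := H' ord0; rewrite (DA iA zA) (DA s0A zA); have := near j jA; lra'.
    by have := H' ord0; rewrite (DBA iA zA) (DA s0A zA); have := near i iA; lra'.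
  move=> H.
  have : Some z \in exp_U e U x y i.
    apply/inU' => j.
    case: (boolP (s i \in A)) => iA.
      case: (boolP (s j \in A)) => jA.
        by rewrite (DA iA zA) (DA jA zA); exact: H.
      by rewrite (DA iA zA); have := H j; have := dle (s j) z; lra'.
    by have := H ord0; have := near i iA; lra'.
  by rewrite USome => /andP[].
have Asite : forall l, s l \in A -> d (s l) y + d y z <= d (s l) z.
  by move=> l lA; rewrite (dAy lA); exact: cutA.
have Asite' : forall l, s l \in A -> d (s ord0) y + d y z <= d (s l) z.
  by move=> l lA; have := Asite l lA; have := FactY l; lra'.
have s0z : d (s ord0) z = d (s ord0) y + d y z.
  apply/eqP; rewrite eq_le dtri /=; exact: Asite.
have smz : d (s m) z <= d (s ord0) y + d y z.
  by rewrite -smy; exact: dtri.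
case: (eqVneq i ord0) => [->|i0].
  split.
    move=> zU0.
    have g0 : d (sg ord0) z = d (sg m) y + d y z.
      apply/eqP; rewrite eq_le -c1 dtri /=.
      by have := cutA sg0A zA; rewrite (dAy sg0A).
    have gm : d (sg m) z = d (sg m) y + d y z.
      apply/eqP; rewrite eq_le dtri /= -g0.
      exact: (iffLR (inU ord0 z) zU0 m).
    have zUm : z \in U m.
      apply/inU => j; have := (iffLR (inU ord0 z) zU0) j.
      by rewrite gm -g0.
    have smz' : d (s m) z = d (s ord0) y + d y z.
      apply/eqP; rewrite eq_le smz /= leNgt; apply/negP => H.
      have : d (s m) z < d (s m) y + d y z by rewrite smy.
      by move/Equiv; rewrite gm ltxx.
    have Sz : Some z \in exp_U e U x y m by rewrite USome zUm (negbTE m0).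
    have H' := iffLR (inU' m (Some z)) Sz.
    move=> j; rewrite s0z; case: (boolP (s j \in A)) => jA.
      exact: Asite' jA.
    by have := H' j; rewrite (DB smA zA) (DB jA zA) smz'.
  move=> H.
  have smz' : d (s m) z = d (s ord0) y + d y z.
    by apply/eqP; rewrite eq_le smz /= -s0z; exact: H.
  have gm : d (sg m) z = d (sg m) y + d y z.
    apply/eqP; rewrite eq_le dtri /= leNgt; apply/negP => /Equiv.
    by rewrite smz' smy ltxx.
  have zUm : z \in U m.
    have : Some z \in exp_U e U x y m.
      apply/inU' => j; rewrite (DB smA zA) smz' -s0z.
      by have := H j; have := dle (s j) z; lra'.
    by rewrite USome => /andP[].
  apply/inU => j; have := (iffLR (inU m z) zUm) j; have := dtri (sg ord0) y z.
  by rewrite c1 -gm; lra'.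
have USi : (Some z \in exp_U e U x y i) = (z \in U i) by rewrite USome (negbTE i0) andbT.
case: (boolP (s i \in A)) => iA.
  split.
    move=> zU; have := iffLR (inU' i (Some z)) (etrans USi (zU : (z \in U i) = true)) m.
    rewrite (DAB iA zA) (DB smA zA); have := Asite i iA; have := step1A i0 iA.
    by have := smz; lra'.
  by move=> H; have := H m; have := Asite i iA; have := step1A i0 iA; have := smz; lra'.
split.
  move=> zU j; have H' := iffLR (inU' i (Some z)) (etrans USi (zU : (z \in U i) = true)).
  case: (boolP (s j \in A)) => jA.
    have := H' m; rewrite (DB iA zA) (DB smA zA).
    by have := smz; have := Asite' j jA; lra'.
  by have := H' j; rewrite (DB iA zA) (DB jA zA).
move=> H; rewrite -USi; apply/inU' => j; rewrite (DB iA zA).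
by have := H j; have := dle (s j) z; lra'.
Qed.

Lemma sol_main : exists s0 : 'I_k.+1 -> V,
  (forall i, s' i = Some (s0 i)) /\ is_solution e w U S s0.
Proof.
exists s; split => // i; split; first exact: sS.
apply/setP => z; apply/idP/cellP; [exact: (iffLR (key i z)) | exact: (iffRL (key i z))].
Qed.

End WithM.
End Sol.
End Main.

Unset Implicit Arguments. Set Strict Implicit.

Theorem lemma17 (R : realType) (V : finType) (e : rel V) (w : V -> V -> R)
    (k : nat) (U S : 'I_k.+1 -> {set V}) (x y : V) (eps : R) :
  is_tree e -> edge_lengths e w ->
  \bigcup_(i < k.+1) U i = [set: V] ->
  (forall i, S i \subset Wset U i) ->
  e x y -> x \in Wset U ord0 -> y \in U ord0 :\: Wset U ord0 ->
  0 < eps -> (eps%:E < res e w U S)%E ->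
  (exists s, is_solution e w U S s) ->
  forall s' : 'I_k.+1 -> option V,
    is_solution (exp_rel e x y) (exp_len w x y eps) (exp_U e U x y) (exp_S S) s' ->
    exists s : 'I_k.+1 -> V,
      (forall i, s' i = Some (s i)) /\ is_solution e w U S s.
Proof.
move=> tree wl _ SW exy _ yU epos eres [sg sgsol] s' s'sol.
have [yU0 yW] : y \in U ord0 /\ y \notin Wset U ord0.
  by case/setDP: yU => a b; split.
have [m m0 ym] := notW yU0 yW.
exact: (sol_main tree wl exy epos SW yU eres sgsol s'sol m0 ym).
Qed.
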